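(* For any finite-dimensional complex Lie algebra $\mathfrak{h}$, $\mathcal{F}(\mathcal{C}^\bullet\mathfrak{h},\mathfrak{sl}_2)_{(0)}=\mathcal{F}^1(\mathcal{C}^\bullet\mathfrak{h},\mathfrak{sl}_2)_{(0)}$.
   Context: $\mathcal{C}^\bullet\mathfrak{h}=(\bigwedge^\bullet\mathfrak{h}^*,d)$ is the Chevalley–Eilenberg cochain cdga of $\mathfrak{h}$. For a cdga $A$ and finite-dimensional Lie algebra $\mathfrak{g}$, $\mathcal{F}(A,\mathfrak{g})=\{\omega\in A^1\otimes\mathfrak{g}: d\omega+\frac12[\omega,\omega]=0\}$ (for $\omega=\sum_k\eta_k\otimes g_k$: $\sum_k d\eta_k\otimes g_k+\sum_{k<l}\eta_k\eta_l\otimes[g_k,g_l]=0$), and $\mathcal{F}^1(A,\mathfrak{g})=\{\eta\otimes g:\eta\in A^1,\ d\eta=0,\ g\in\mathfrak{g}\}$. Equivalently, identifying $\mathfrak{h}^*\otimes\mathfrak{sl}_2=\mathrm{Hom}(\mathfrak{h},\mathfrak{sl}_2)$, $\mathcal{F}(\mathcal{C}^\bullet\mathfrak{h},\mathfrak{sl}_2)$ is the variety of Lie algebra homomorphisms $\mathfrak{h}\to\mathfrak{sl}_2$ and $\mathcal{F}^1$ the subset of those of rank at most $1$. $X_{(0)}$ denotes the analytic germ at $0$. *)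

(* Defs.v *)
(* Complex numbers are modelled as R[i] = complex R for an
   arbitrary R : realType (every realType is isomorphic to the reals). *)
From HB Require Import structures.
From mathcomp Require Import all_boot all_order all_algebra.
From mathcomp Require Import complex.
From mathcomp Require Import reals.
Set Implicit Arguments. Unset Strict Implicit. Unset Printing Implicit Defensive.
Import Order.TTheory GRing.Theory Num.Theory.
Local Open Scope ring_scope.

(* A finite-dimensional Lie algebra h over a ring C, of dimension n, given by
   its structure constants in a basis e_0..e_{n-1}:
     [e_i, e_j] = \sum_k c i j k e_k. *)
Definition is_lie_structure (C : comNzRingType) (n : nat)
    (c : 'I_n -> 'I_n -> 'I_n -> C) : Prop :=
  (forall i k, c i i k = 0) /\
  (forall i j k, c i j k = - c j i k) /\
  (* Jacobi: [[e_i,e_j],e_l] + [[e_j,e_l],e_i] + [[e_l,e_i],e_j] = 0 *)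
  (forall i j l m,
     \sum_(k < n) (c i j k * c k l m + c j l k * c k i m + c l i k * c k j m)
       = 0).

Definition in_sl2 (C : comNzRingType) (g : 'M[C]_2) : Prop := \tr g = 0.

Definition mx_bracket (C : comNzRingType) (X Y : 'M[C]_2) : 'M[C]_2 :=
  X *m Y - Y *m X.

(* A linear map phi : h -> sl_2 is encoded by A i = phi (e_i).
   F(C^. h, sl_2) = variety of Lie algebra homomorphisms h -> sl_2. *)
Definition in_F (C : comNzRingType) (n : nat) (c : 'I_n -> 'I_n -> 'I_n -> C)
    (A : 'I_n -> 'M[C]_2) : Prop :=
  (forall i, in_sl2 (A i)) /\
  (forall i j, mx_bracket (A i) (A j) = \sum_(k < n) c i j k *: A k).

(* F^1(C^. h, sl_2) = { eta (x) g : eta in h^*, d eta = 0, g in sl_2 }.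
   d eta = 0 in the Chevalley-Eilenberg complex means eta vanishes on all
   brackets: eta([e_i,e_j]) = \sum_k c i j k eta_k = 0. *)
Definition in_F1 (C : comNzRingType) (n : nat) (c : 'I_n -> 'I_n -> 'I_n -> C)
    (A : 'I_n -> 'M[C]_2) : Prop :=
  exists (eta : 'I_n -> C) (g : 'M[C]_2),
    [/\ in_sl2 g,
        (forall i j, \sum_(k < n) c i j k * eta k = 0) &
        (forall i, A i = eta i *: g)].

(* Equality of set germs at 0 in Hom(h, gl_2) = C^(4n): the two sets agree on
   some polydisc neighbourhood of 0. *)
Definition germ_eq0 (R : rcfType) (n : nat) (P Q : ('I_n -> 'M[R[i]]_2) -> Prop)
  : Prop :=
  exists2 e : R[i], 0 < e &
    forall A : 'I_n -> 'M[R[i]]_2,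
      (forall k a b, `|A k a b| < e) -> (P A <-> Q A).

(* Main.v *)
Require Import Defs.
From HB Require Import structures.
From mathcomp Require Import all_boot all_order all_algebra.
From mathcomp Require Import ring.
From mathcomp Require Import complex.
From mathcomp Require Import reals.
Import Order.TTheory GRing.Theory Num.Theory.
Local Open Scope ring_scope.
Set Implicit Arguments. Unset Strict Implicit.

Section TwoByTwo.
Variable C : comNzRingType.

Lemma mx2P (M N : 'M[C]_2) : M 0 0 = N 0 0 -> M 0 1 = N 0 1 ->
  M 1 0 = N 1 0 -> M 1 1 = N 1 1 -> M = N.
Proof.
move=> h00 h01 h10 h11; apply/matrixP => i j.
have e : forall k : 'I_2, k = 0 \/ k = 1.
  move=> [[|[|//]]] H; [left|right]; by apply/val_inj.
by case: (e i) => ->; case: (e j) => ->.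
Qed.

Lemma mul2E (X Y : 'M[C]_2) a b : (X *m Y) a b = X a 0 * Y 0 b + X a 1 * Y 1 b.
Proof. rewrite mxE !big_ord_recl big_ord0 addr0 /=.
have -> : (lift ord0 ord0 : 'I_2) = 1 by apply/val_inj.
by have -> : (ord0 : 'I_2) = 0 by apply/val_inj.
Qed.

Lemma tr2E (X : 'M[C]_2) : \tr X = X 0 0 + X 1 1.
Proof. rewrite /mxtrace !big_ord_recl big_ord0 addr0 /=.
have -> : (lift ord0 ord0 : 'I_2) = 1 by apply/val_inj.
by have -> : (ord0 : 'I_2) = 0 by apply/val_inj.
Qed.

Definition s2 (X : 'M[C]_2) := X 0 0 ^+ 2 + X 0 1 * X 1 0.

Lemma ad3 (X A : 'M[C]_2) : X 1 1 = - X 0 0 ->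
  mx_bracket X (mx_bracket X (mx_bracket X A)) = (4 * s2 X) *: mx_bracket X A.
Proof.
move=> hX; rewrite /s2 /mx_bracket.
apply: mx2P; rewrite !(mul2E, mxE) hX; ring.
Qed.

End TwoByTwo.


Section Prop3.
Variable F : fieldType.
Definition ratio3 (a b c p q r : F) :=
  if a != 0 then p / a else if b != 0 then q / b else r / c.

Lemma solve1 (d x y z w : F) : d != 0 -> d * x = y * z -> x = z / d * y.
Proof. move=> Hd h; apply: (mulfI Hd); rewrite h; field. exact: Hd. Qed.

Lemma prop3 (a b c p q r : F) : [|| a != 0, b != 0 | c != 0] ->
  a * q = b * p -> a * r = c * p -> b * r = c * q ->
  [/\ p = ratio3 a b c p q r * a, q = ratio3 a b c p q r * b
    & r = ratio3 a b c p q r * c].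
Proof.
move=> nz h1 h2 h3; rewrite /ratio3.
case: (eqVneq a 0) => [a0|Ha] /=.
  move: h1 h2; rewrite a0 !mul0r => h1 h2.
  case: (eqVneq b 0) => [b0|Hb] /=.
    rewrite b0 in nz h1 h3; rewrite /= a0 eqxx /= in nz.
    move: h3; rewrite b0 mul0r => h3.
    have : c * p == 0 by rewrite -h2.
    rewrite mulf_eq0 (negbTE nz) /= => /eqP ->.
    have : c * q == 0 by rewrite -h3.
    rewrite mulf_eq0 (negbTE nz) /= => /eqP ->.
    by rewrite !mulr0 divfK.
  split.
  - have : b * p == 0 by rewrite -h1.
    by rewrite mulf_eq0 (negbTE Hb) /= => /eqP ->; rewrite mulr0.
  - by rewrite divfK.
  - exact: solve1 Hb h3.
split.
- by rewrite divfK.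
- exact: solve1 Ha h1.
- exact: solve1 Ha h2.
Qed.
End Prop3.

Section PropMx.
Variable F : fieldType.
Hypothesis two_nz : (2 : F) != 0.

Definition ratio (g A : 'M[F]_2) :=
  ratio3 (g 0 0) (g 0 1) (g 1 0) (A 0 0) (A 0 1) (A 1 0).

Lemma prop_mx (g A : 'M[F]_2) : g 1 1 = - g 0 0 -> A 1 1 = - A 0 0 -> g != 0 ->
  g 0 0 * A 0 1 = g 0 1 * A 0 0 -> g 0 0 * A 1 0 = g 1 0 * A 0 0 ->
  g 0 1 * A 1 0 = g 1 0 * A 0 1 -> A = ratio g A *: g.
Proof.
move=> hg hA gnz h1 h2 h3.
have nz : [|| g 0 0 != 0, g 0 1 != 0 | g 1 0 != 0].
  case: (eqVneq (g 0 0) 0) => e1 //=; case: (eqVneq (g 0 1) 0) => e2 //=;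
    case: (eqVneq (g 1 0) 0) => e3 //=.
  have g0 : g = 0 by apply: mx2P; rewrite ?mxE //; rewrite hg e1 oppr0.
  by rewrite g0 eqxx in gnz.
have [p1 p2 p3] := prop3 nz h1 h2 h3.
rewrite /ratio; apply: mx2P; rewrite !mxE //; by rewrite hA hg mulrN -p1.
Qed.

Lemma comm_minors (X A : 'M[F]_2) : X 1 1 = - X 0 0 -> A 1 1 = - A 0 0 ->
  mx_bracket X A = 0 ->
  [/\ X 0 0 * A 0 1 = X 0 1 * A 0 0, X 0 0 * A 1 0 = X 1 0 * A 0 0 &
      X 0 1 * A 1 0 = X 1 0 * A 0 1].
Proof.
move=> hX hA /matrixP e.
have e00 := e 0 0; have e01 := e 0 1; have e10 := e 1 0.
move: e00 e01 e10; rewrite /mx_bracket !(mul2E, mxE) hX hA => e00 e01 e10.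
split; apply/eqP; rewrite -subr_eq0.
- have : 2 * (X 0 0 * A 0 1 - X 0 1 * A 0 0) == 0.
    by apply/eqP; rewrite -e01; ring.
  by rewrite mulf_eq0 (negbTE two_nz).
- have : 2 * (X 0 0 * A 1 0 - X 1 0 * A 0 0) == 0.
    by apply/eqP; move: e10 => /(congr1 (fun x => - x)); rewrite oppr0 => <-; ring.
  by rewrite mulf_eq0 (negbTE two_nz).
- by apply/eqP; rewrite -e00; ring.
Qed.

Definition cross2 (g A : 'M[F]_2) :=
  2 * g 0 0 * A 0 0 + g 0 1 * A 1 0 + g 1 0 * A 0 1.

Lemma iso_minors (g A : 'M[F]_2) : s2 g = 0 -> s2 A = 0 -> cross2 g A = 0 ->
  [/\ g 0 0 * A 0 1 = g 0 1 * A 0 0, g 0 0 * A 1 0 = g 1 0 * A 0 0 &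
      g 0 1 * A 1 0 = g 1 0 * A 0 1].
Proof.
rewrite /s2 /cross2 => N N' B.
set a := g 0 0; set b := g 0 1; set c := g 1 0.
set p := A 0 0; set q := A 0 1; set r := A 1 0.
move: N N' B; rewrite -/a -/b -/c -/p -/q -/r => N N' B.
split; apply/eqP; rewrite -subr_eq0 -sqrf_eq0; apply/eqP.
- have -> : (a * q - b * p) ^+ 2 = - b * q * (2 * a * p + b * r + c * q)
     + q ^+ 2 * (a ^+ 2 + b * c) + b ^+ 2 * (p ^+ 2 + q * r) by ring.
  by rewrite B N N'; ring.
- have -> : (a * r - c * p) ^+ 2 = - c * r * (2 * a * p + b * r + c * q)
     + r ^+ 2 * (a ^+ 2 + b * c) + c ^+ 2 * (p ^+ 2 + q * r) by ring.
  by rewrite B N N'; ring.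
- have -> : (b * r - c * q) ^+ 2 = (2 * a * p + b * r + c * q) * (b * r + c * q - 2 * a * p)
     + 4 * a ^+ 2 * (p ^+ 2 + q * r) + 4 * p ^+ 2 * (a ^+ 2 + b * c)
     - 4 * (a ^+ 2 + b * c) * (p ^+ 2 + q * r) by ring.
  by rewrite B N N'; ring.
Qed.
End PropMx.

Section Lin.
Variable C : idomainType.

Lemma bracketDr (X Y Z : 'M[C]_2) :
  mx_bracket X (Y + Z) = mx_bracket X Y + mx_bracket X Z.
Proof. rewrite /mx_bracket mulmxDr mulmxDl; by rewrite opprD addrACA. Qed.

Lemma bracketDl (X Y Z : 'M[C]_2) :
  mx_bracket (X + Y) Z = mx_bracket X Z + mx_bracket Y Z.
Proof. rewrite /mx_bracket mulmxDr mulmxDl; by rewrite opprD addrACA. Qed.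

Lemma bracketZr (X Y : 'M[C]_2) a :
  mx_bracket X (a *: Y) = a *: mx_bracket X Y.
Proof. by rewrite /mx_bracket scalerBr scalemxAr scalemxAl. Qed.

Lemma bracket_sumr n (X : 'M[C]_2) (a : 'I_n -> C) (Y : 'I_n -> 'M[C]_2) :
  mx_bracket X (\sum_(l < n) a l *: Y l) = \sum_(l < n) a l *: mx_bracket X (Y l).
Proof.
rewrite /mx_bracket mulmx_sumr mulmx_suml -sumrB; apply: eq_bigr => l _.
by rewrite scalerBr scalemxAr scalemxAl.
Qed.

Definition phiv n (A : 'I_n -> 'M[C]_2) (v : 'rV[C]_n) : 'M[C]_2 :=
  \sum_(l < n) v 0 l *: A l.

Definition Madj n (c : 'I_n -> 'I_n -> 'I_n -> C) (i j : 'I_n) : 'M[C]_n :=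
  \matrix_(l, m) (c i l m + c j l m).

Lemma phivD n A (v w : 'rV[C]_n) : phiv A (v + w) = phiv A v + phiv A w.
Proof. rewrite /phiv -big_split /=; apply: eq_bigr => l _; by rewrite mxE scalerDl. Qed.

Lemma phivZ n A a (v : 'rV[C]_n) : phiv A (a *: v) = a *: phiv A v.
Proof. rewrite /phiv scaler_sumr; apply: eq_bigr => l _; by rewrite mxE scalerA. Qed.

Lemma phiv_delta n A (k : 'I_n) : phiv A (delta_mx 0 k) = A k.
Proof.
rewrite /phiv (bigD1 k) //= big1 ?addr0; first by rewrite mxE !eqxx scale1r.
by move=> l /negbTE hl; rewrite mxE eqxx /= hl scale0r.
Qed.

Lemma phivM n c (A : 'I_n -> 'M[C]_2) i j (v : 'rV[C]_n) :
  (forall i j, mx_bracket (A i) (A j) = \sum_(k < n) c i j k *: A k) ->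
  phiv A (v *m Madj c i j) = mx_bracket (A i + A j) (phiv A v).
Proof.
move=> hb; rewrite /phiv bracket_sumr.
under [RHS]eq_bigr => l _ do rewrite bracketDl !hb -big_split scaler_sumr.
rewrite exchange_big /=; apply: eq_bigr => m _.
rewrite !mxE scaler_suml; apply: eq_bigr => l _.
by rewrite mxE -scalerDl scalerA mulrDr.
Qed.

Lemma eig_root n (M : 'M[C]_n) (phi : 'rV[C]_n -> 'M[C]_2) X (y : 'rV[C]_n) nu :
  (forall v w, phi (v + w) = phi v + phi w) ->
  (forall a v, phi (a *: v) = a *: phi v) ->
  (forall v, phi (v *m M) = mx_bracket X (phi v)) ->
  mx_bracket X (phi y) = nu *: phi y -> phi y != 0 ->
  root (char_poly M) nu.
Proof.
move=> hD hZ hM hy.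
have phi0 : phi 0 = 0.
  by rewrite -(scale0r (0 : 'rV[C]_n)) hZ scale0r.
case: n M phi y hD hZ hM hy phi0 => [|n'] M phi y hD hZ hM hy phi0.
  by rewrite thinmx0 phi0 eqxx.
move=> ynz.
have key : forall p, phi (y *m horner_mx M p) = p.[nu] *: phi y.
  elim/poly_ind => [|p a IH].
    by rewrite rmorph0 mulmx0 phi0 horner0 scale0r.
  rewrite rmorphD rmorphM /= horner_mx_X horner_mx_C mulmxDr mulmxA hD hM IH.
  by rewrite mul_mx_scalar hZ bracketZr hy hornerMXaddC scalerA scalerDl.
have := key (char_poly M); rewrite Cayley_Hamilton mulmx0 phi0 => /esym/eqP.
by rewrite scalemx_eq0 (negbTE ynz) orbF.
Qed.

End Lin.

Section Core.
Variable C : numClosedFieldType.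

Lemma tr0E (A : 'M[C]_2) : in_sl2 A -> A 1 1 = - A 0 0.
Proof. by rewrite /in_sl2 tr2E => /eqP; rewrite addrC addr_eq0 => /eqP. Qed.

Lemma core n (c : 'I_n -> 'I_n -> 'I_n -> C) (A : 'I_n -> 'M[C]_2) i j k :
  in_F c A -> s2 (A i + A j) != 0 -> mx_bracket (A i + A j) (A k) != 0 ->
  exists2 nu, nu != 0 &
    (nu ^+ 2 = 4 * s2 (A i + A j) /\ root (char_poly (Madj c i j)) nu).
Proof.
move=> [hsl hb] hs hW.
set X := A i + A j in hs hW *.
have hX : X 1 1 = - X 0 0 by rewrite !mxE !tr0E // opprD.
set s := s2 X in hs *.
pose mu := sqrtC s.
have hmu : mu ^+ 2 = s := sqrtCK s.
have mu0 : mu != 0.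
  by apply/eqP => m0; move: hs; rewrite -hmu m0 expr0n /= eqxx.
set W := mx_bracket X (A k) in hW *.
set Z := mx_bracket X W.
have hZ : mx_bracket X Z = (4 * s) *: W := ad3 _ hX.
have hY : forall nu, nu ^+ 2 = 4 * s ->
    mx_bracket X (Z + nu *: W) = nu *: (Z + nu *: W).
  move=> nu hnu.
  by rewrite bracketDr bracketZr hZ -/Z [nu *: (Z + _)]scalerDr scalerA -expr2 hnu addrC.
have hroot : forall nu, nu ^+ 2 = 4 * s -> Z + nu *: W != 0 ->
    root (char_poly (Madj c i j)) nu.
  move=> nu hnu hnz.
  pose e : 'rV[C]_n := delta_mx 0 k.
  pose yy := e *m Madj c i j *m Madj c i j + nu *: (e *m Madj c i j).
  have hy : phiv A yy = Z + nu *: W.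
    by rewrite /yy /e phivD phivZ !phivM // phiv_delta.
  apply: (@eig_root _ _ (Madj c i j) (phiv A) X yy nu).
  - exact: phivD.
  - exact: phivZ.
  - by move=> v; rewrite phivM.
  - by rewrite hy; apply: hY.
  - by rewrite hy.
have h1 : (2 * mu) ^+ 2 = 4 * s by rewrite -hmu; ring.
have h2 : (- (2 * mu)) ^+ 2 = 4 * s by rewrite sqrrN.
have n2 : (2 : C) * mu != 0 by rewrite mulf_neq0 // pnatr_eq0.
case: (eqVneq (Z + (2 * mu) *: W) 0) => [Y0 | Ynz]; last first.
  by exists (2 * mu) => //; split => //; apply: hroot.
have Ynz : Z + (- (2 * mu)) *: W != 0.
  apply/eqP => Y1.
  have : (2 * mu - (- (2 * mu))) *: W = 0.
    rewrite scalerBl.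
    have -> : (2 * mu) *: W - (- (2 * mu)) *: W =
       (Z + (2 * mu) *: W) - (Z + (- (2 * mu)) *: W)
      by rewrite opprD addrACA subrr add0r.
    by rewrite Y0 Y1 subrr.
  move/eqP; rewrite scalemx_eq0 (negbTE hW) orbF opprK.
  have -> : 2 * mu + 2 * mu = 2 * (2 * mu) by ring.
  by rewrite mulf_eq0 (negbTE n2) orbF pnatr_eq0.
by exists (- (2 * mu)); [rewrite oppr_eq0 | split => //; apply: hroot].
Qed.

End Core.

Section Finish.
Variable C : idomainType.

Lemma bracket_scal (a b : C) (g : 'M[C]_2) : mx_bracket (a *: g) (b *: g) = 0.
Proof. by rewrite /mx_bracket -!scalemxAl -!scalemxAr !scalerA mulrC subrr. Qed.

Lemma sum_scal n (c : 'I_n -> C) (eta : 'I_n -> C) (g : 'M[C]_2) :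
  \sum_(k < n) c k *: (eta k *: g) = (\sum_(k < n) c k * eta k) *: g.
Proof. by rewrite scaler_suml; apply: eq_bigr => k _; rewrite scalerA. Qed.

Lemma F1_F n (c : 'I_n -> 'I_n -> 'I_n -> C) A : in_F1 c A -> in_F c A.
Proof.
case=> eta [g] [hg hc hA]; split.
  by move=> i; rewrite /in_sl2 hA mxtraceZ hg mulr0.
move=> i j; rewrite !hA bracket_scal.
under eq_bigr => k _ do rewrite hA.
by rewrite sum_scal hc scale0r.
Qed.

Lemma finish n (c : 'I_n -> 'I_n -> 'I_n -> C) A (g : 'M[C]_2) (eta : 'I_n -> C) :
  in_F c A -> in_sl2 g -> g != 0 -> (forall k, A k = eta k *: g) -> in_F1 c A.
Proof.
move=> [_ hb] hg gnz hA; exists eta, g; split => // i j.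
have := hb i j; rewrite !hA bracket_scal.
under eq_bigr => k _ do rewrite hA.
rewrite sum_scal => /esym/eqP; rewrite scalemx_eq0 (negbTE gnz) orbF.
by move/eqP.
Qed.

Lemma F1_zero n (c : 'I_n -> 'I_n -> 'I_n -> C) A :
  (forall k, A k = 0) -> in_F1 c A.
Proof.
move=> h0; exists (fun _ => 0), 0; split.
- by rewrite /in_sl2 mxtrace0.
- by move=> i j; rewrite big1 // => k _; rewrite mulr0.
- by move=> i; rewrite h0 scale0r.
Qed.

End Finish.

Section Bounds.
Variable C : numFieldType.

Lemma bound4 (x y z t : C) : 0 < t -> `|x| < t -> `|y| < t -> `|z| < t ->
  `|4 * (x ^+ 2 + y * z)| < 8 * t ^+ 2.
Proof.
move=> t0 hx hy hz.
have h1 : `|x| ^+ 2 < t ^+ 2 by rewrite !expr2 ltr_pM.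
have h2 : `|y| * `|z| < t * t by rewrite ltr_pM.
have h3 : `|x ^+ 2 + y * z| < t ^+ 2 + t ^+ 2.
  apply: (le_lt_trans (ler_normD _ _)); rewrite normrX normrM.
  by apply: ltrD => //; rewrite expr2.
rewrite normrM ger0_norm ?ler0n //.
have -> : 8 * t ^+ 2 = 4 * (t ^+ 2 + t ^+ 2) by ring.
by rewrite ltr_pM2l ?ltr0n.
Qed.

Lemma delta_seq (s : seq C) :
  exists2 d : C, 0 < d & forall z, z \in s -> z != 0 -> d <= `|z|.
Proof.
elim: s => [|z s [d d0 hd]]; first by exists 1.
case: (eqVneq z 0) => [z0|zn0].
  exists d => // w; rewrite in_cons => /orP [/eqP ->|ws]; first by rewrite z0 eqxx.
  exact: hd.
have cmp : (d >=< `|z|)%O.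
  by apply: real_comparable; [exact: gtr0_real | exact: normr_real].
exists (Order.min d `|z|).
  by rewrite comparable_lt_min //; apply/andP; split => //; rewrite normr_gt0.
move=> w; rewrite in_cons => /orP [/eqP ->|ws] wn0.
  by rewrite comparable_ge_min // lexx orbT.
by rewrite comparable_ge_min // hd.
Qed.

Lemma sum_lt (x y t : C) : `|x| < t -> `|y| < t -> `|x + y| < t + t.
Proof. by move=> hx hy; apply: (le_lt_trans (ler_normD _ _)); apply: ltrD. Qed.

End Bounds.

Theorem corollary4p6 (R : realType) (n : nat)
    (c : 'I_n -> 'I_n -> 'I_n -> R[i]) :
  is_lie_structure c ->
  germ_eq0 (R := R) (in_F c) (in_F1 c).
Proof.
move=> _.
pose rs := flatten [seq sval (closed_field_poly_normal (char_poly (Madj c x.1 x.2)))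
                   | x <- enum {: 'I_n * 'I_n}].
have rsP : forall i j nu, root (char_poly (Madj c i j)) nu -> nu \in rs.
  move=> i j nu hr; apply/flatten_mapP; exists (i, j); first by rewrite mem_enum.
  case: (closed_field_poly_normal _) => r /= hp.
  by move: hr; rewrite {1}hp (monicP (char_poly_monic _)) scale1r root_prod_XsubC.
have [d d0 hd] := delta_seq rs.
have two_nz : (2 : R[i]) != 0 by rewrite pnatr_eq0.
exists (d / 8); first by rewrite divr_gt0 // ltr0n.
move=> A hA; split; last exact: F1_F.
move=> hF; have [hsl hb] := hF.
have htr k : A k 1 1 = - A k 0 0 := tr0E (hsl k).
have K : forall i j k, s2 (A i + A j) != 0 -> mx_bracket (A i + A j) (A k) = 0.
  move=> i j k hs; case: (eqVneq (mx_bracket (A i + A j) (A k)) 0) => // hW; exfalso.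
  have [nu nu0 [hnu hr]] := core hF hs hW.
  have dn := hd _ (rsP _ _ _ hr) nu0.
  have d4 : d / 8 + d / 8 = d / 4 by field.
  have b1 a b : `|A i a b + A j a b| < d / 4.
    by rewrite -d4; apply: sum_lt.
  have hlt : `|nu ^+ 2| < 8 * (d / 4) ^+ 2.
    rewrite hnu /s2 !mxE; apply: bound4 => //.
    by rewrite divr_gt0 // ltr0n.
  have hle : d * d <= `|nu ^+ 2| by rewrite normrX expr2 ler_pM // ltW.
  have := le_lt_trans hle hlt.
  have -> : 8 * (d / 4) ^+ 2 = (d * d) * 2^-1 by field.
  rewrite ltr_pMr ?mulr_gt0 // => h.
  have h2 : (2 : R[i])^-1 < 1 by rewrite invf_lt1 ?ltr0n // ltr1n.
  by have := lt_trans h h2; rewrite ltxx.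
case: (pickP (fun x : 'I_n * 'I_n => s2 (A x.1 + A x.2) != 0)) => [[i j] /= hs | hnone].
  set g := A i + A j.
  have hg : g 1 1 = - g 0 0 by rewrite !mxE !htr opprD.
  have gnz : g != 0.
    by apply/eqP => g0; move: hs; rewrite -/g g0 /s2 !mxE mulr0 expr0n addr0 eqxx.
  apply: (@finish _ _ _ _ g (fun k => ratio g (A k)) hF) => //.
    by rewrite /in_sl2 tr2E hg addrN.
  move=> k; have [m1 m2 m3] := comm_minors two_nz hg (htr k) (K i j k hs).
  exact: prop_mx.
have hs0 i j : s2 (A i + A j) = 0 by have := hnone (i, j); move/negbFE/eqP.
have hsA k : s2 (A k) = 0.
  have := hs0 k k; have -> : s2 (A k + A k) = 4 * s2 (A k) by rewrite /s2 !mxE; ring.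
  by move/eqP; rewrite mulf_eq0 pnatr_eq0 /= => /eqP.
have hcr i j : cross2 (A i) (A j) = 0.
  have := hs0 i j.
  have -> : s2 (A i + A j) = s2 (A i) + s2 (A j) + cross2 (A i) (A j).
    by rewrite /s2 /cross2 !mxE; ring.
  by rewrite !hsA !add0r.
case: (pickP (fun k => A k != 0)) => [i0 /= hi0 | hz].
  apply: (@finish _ _ _ _ (A i0) (fun k => ratio (A i0) (A k)) hF) => // k.
  have [m1 m2 m3] := iso_minors (hsA i0) (hsA k) (hcr i0 k).
  exact: prop_mx.
apply: F1_zero => k; have := hz k; by move/negbFE/eqP.
Qed.
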